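(* Let $(T,E)$ be the $3$-regular tree, $x\in T$ and $y$ a neighbor of $x$. Define functions $u_t:\mathbb Z\to\mathbb Z$ for $t\ge 0$ recursively: $u_0[0]=u_0[-1]=1$ and $u_0[s]=0$ for all other $s$; given $u_t$, first define $u_{t+1}[s]$ for odd $s$ by $$u_{t+1}[s]=\begin{cases}2u_t[s-1]-u_t[s]+u_t[s+1] & s<0,\\ u_t[s-1]-u_t[s]+2u_t[s+1] & s>0,\end{cases}$$ and then for even $s$ by $$u_{t+1}[s]=\begin{cases}2u_{t+1}[s-1]-u_t[s]+u_{t+1}[s+1] & s<0,\\ u_{t+1}[s-1]-u_t[s]+2u_{t+1}[s+1] & s\ge 0.\end{cases}$$ Then for every $t\ge 0$: for $s\ge 0$, $u_t[s]=r_{2t}(x,y)_z$ for every $z\in T_s(x,y)$, and for $s\le -1$, $u_t[s]=r_{2t}(x,y)_z$ for every $z\in T'_{-s}(x,y)$; moreover $$f_{4t-1}=\sum_{s\ge 1,\ s\text{ odd}}2^s u_t[s]+\sum_{s\ge 1,\ s \text{ odd}}2^{s-1}u_t[-s],\qquad f_{4t+1}=\sum_{s\ge 0,\ s\text{ even}}2^s u_t[s]+\sum_{s\ge 2,\ s\text{ even}}2^{s-1}u_t[-s].$$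
   Context: $(f_i)_{i\in\mathbb Z}$ are the Fibonacci numbers with $f_0=0$, $f_1=1$, $f_{i+1}=f_i+f_{i-1}$ for all $i\in\mathbb Z$. $(T,E)$ is the $3$-regular tree with graph distance $d$. $K_0(T)$ is the free abelian group with basis $\{s(z):z\in T\}$, elements written $a=\sum_z a_z s(z)$. For $v\in T$ the reflection $\sigma^v$ on $K_0(T)$ is $(\sigma^v a)_z=a_z$ for $z\ne v$, $(\sigma^v a)_v=-a_v+\sum_{\{w,v\}\in E}a_w$. $\Sigma^x$ is the composition of all $\sigma^v$ with $d(x,v)$ even and $\underline\Sigma^x$ the composition of all $\sigma^v$ with $d(x,v)$ odd. For neighbors $x,y$: $r_0(x,y)=s(x)+s(y)$, and $r_{t+1}(x,y)=\underline\Sigma^x r_t(x,y)$ for $t$ even, $r_{t+1}(x,y)=\Sigma^x r_t(x,y)$ for $t$ odd. $T_s(x,y)$ is the set of vertices $z$ with $d(x,z)=s$ such that the path from $x$ to $z$ does not pass through $y$; $T'_s(x,y)$ is the set of vertices $z$ with $d(x,z)=s$ whose path from $x$ passes through $y$. *)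

(* Defs.v *)
From HB Require Import structures.
From mathcomp Require Import all_boot all_order all_algebra.
From mathcomp Require Import boolp.
Set Implicit Arguments. Unset Strict Implicit. Unset Printing Implicit Defensive.
Import Order.TTheory GRing.Theory Num.Theory.
Local Open Scope ring_scope.

(* ---------- The 3-regular tree ----------
   Model: the Cayley graph of Z/2 * Z/2 * Z/2, i.e. vertices are reduced words
   over the alphabet 'I_3 (no two consecutive letters equal); the three
   neighbours of a word w are obtained by multiplying on the left by a letter c
   (cancelling if w starts with c). *)
Definition reducedw (w : seq 'I_3) : bool := sorted (fun a b => a != b) w.

Definition V := {w : seq 'I_3 | reducedw w}.

Definition nbw (c : 'I_3) (w : seq 'I_3) : seq 'I_3 :=
  if w is a :: w' then (if a == c then w' else c :: w) else [:: c].

Lemma nbw_reduced c w : reducedw w -> reducedw (nbw c w).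
Proof.
case: w => [//|a w] /= H; case: eqP => [_|/eqP ne]; first exact: path_sorted H.
by rewrite /reducedw /= eq_sym ne H.
Qed.

Definition nb (c : 'I_3) (v : V) : V := exist _ (nbw c (val v)) (nbw_reduced c (valP v)).

Definition adj : rel V := fun u v => [exists c : 'I_3, nb c u == v].

Definition dist_is (u v : V) (n : nat) : Prop :=
  (exists p : seq V, path adj u p /\ last u p = v /\ size p = n) /\
  (forall p : seq V, path adj u p -> last u p = v -> (n <= size p)%N).

Definition path_through (x y z : V) : Prop :=
  exists p : seq V, [/\ path adj x p, uniq (x :: p), last x p = z & y \in x :: p].

Definition inT (x y : V) (s : nat) (z : V) : Prop := dist_is x z s /\ ~ path_through x y z.
Definition inT' (x y : V) (s : nat) (z : V) : Prop := dist_is x z s /\ path_through x y z.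

(* ---------- K_0(T) and reflections ----------
   Elements of K_0(T) are represented as functions V -> int (coefficients a_z). *)
Definition K0 := V -> int.

Definition sigma (v : V) (a : K0) : K0 :=
  fun z => if z == v then - a v + \sum_(c < 3) a (nb c v) else a z.

(* Sigma^x : composition of all sigma^v with d(x,v) even (these pairwise
   commute, the v's being pairwise non-adjacent); it acts at each such v as sigma^v. *)
Definition Sigma (x : V) (a : K0) : K0 :=
  fun z => if `[< exists n, dist_is x z n /\ ~~ odd n >] then sigma z a z else a z.

Definition USigma (x : V) (a : K0) : K0 :=
  fun z => if `[< exists n, dist_is x z n /\ odd n >] then sigma z a z else a z.

Fixpoint r (t : nat) (x y : V) : K0 :=
  match t with
  | 0 => fun z => (z == x)%:R + (z == y)%:R
  | t'.+1 => if odd t' then Sigma x (r t' x y) else USigma x (r t' x y)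
  end.

Definition uodd (p : int -> int) (s : int) : int :=
  if s < 0 then 2 * p (s - 1) - p s + p (s + 1)
  else p (s - 1) - p s + 2 * p (s + 1).

Definition ueven (p q : int -> int) (s : int) : int :=
  if s < 0 then 2 * q (s - 1) - p s + q (s + 1)
  else q (s - 1) - p s + 2 * q (s + 1).

Fixpoint u (t : nat) : int -> int :=
  match t with
  | 0 => fun s => ((s == 0) || (s == -1))%:R
  | t'.+1 => let p := u t' in let q := uodd p in
             fun s => if odd `|s|%N then q s else ueven p q s
  end.

Fixpoint fibn (n : nat) : int :=
  match n with
  | 0 => 0
  | 1 => 1
  | (m.+1 as k).+1 => fibn k + fibn m
  end.

(* f_{-(n+1)} = (-1)^n f_{n+1}: the unique extension satisfying the recurrence *)
Definition fibZ (i : int) : int :=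
  match i with
  | Posz n => fibn n
  | Negz n => (-1) ^+ n * fibn n.+1
  end.

(* Main.v *)
Require Import Defs.
From HB Require Import structures.
From mathcomp Require Import all_boot all_order all_algebra.
From mathcomp Require Import boolp.
From mathcomp Require Import zify ring.
Import Order.TTheory GRing.Theory Num.Theory.
Local Open Scope ring_scope.



Definition mulw (w v : seq 'I_3) : seq 'I_3 := foldr nbw v w.

Lemma nbwK c v : reducedw v -> nbw c (nbw c v) = v.
Proof.
case: v => [|a v] /=; first by rewrite eqxx.
case: (eqVneq a c) => [->|ne] H /=.
  case: v H => [|b v] //= /andP [nb _]; by rewrite eq_sym (negbTE nb).
by rewrite eqxx.
Qed.

Lemma mulw_reduced w v : reducedw v -> reducedw (mulw w v).
Proof. elim: w => [|a w IH] //= H; exact: nbw_reduced (IH H). Qed.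

Lemma mulw_nbw d w v : reducedw v -> mulw (nbw d w) v = nbw d (mulw w v).
Proof.
move=> Hv; case: w => [|a w] //=.
case: eqP => [->|_] //=; by rewrite nbwK // mulw_reduced.
Qed.

Lemma mulw_rev w v : reducedw v -> mulw (rev w) (mulw w v) = v.
Proof.
elim: w v => [|a w IH] v Hv //=.
rewrite rev_cons /mulw foldr_rcons -/(mulw _ _) nbwK ?mulw_reduced //; exact: IH.
Qed.

Lemma mulw_nil w : reducedw w -> mulw w [::] = w.
Proof.
elim: w => [|a w IH] //= H.
rewrite IH; last exact: path_sorted H.
case: w H {IH} => [|b w] //= /andP [nb _]; by rewrite eq_sym (negbTE nb).
Qed.

Lemma mulwA a b c : reducedw b -> reducedw c -> mulw (mulw a b) c = mulw a (mulw b c).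
Proof.
move=> Hb Hc; elim: a => [|a1 a IH] //=.
by rewrite mulw_nbw // IH.
Qed.

Lemma reduced_rev w : reducedw w -> reducedw (rev w).
Proof.
rewrite /reducedw => H. rewrite rev_sorted.
by apply: sub_sorted H => a b; rewrite eq_sym.
Qed.

Definition G (x z : V) : seq 'I_3 := mulw (val z) (rev (val x)).

Lemma G_reduced x z : reducedw (G x z).
Proof. apply: mulw_reduced; apply: reduced_rev; exact: valP. Qed.

Lemma G_nb x d z : G x (nb d z) = nbw d (G x z).
Proof. rewrite /G /=; apply: mulw_nbw; apply: reduced_rev; exact: valP. Qed.

Lemma G_x x : G x x = [::].
Proof.
have H := mulw_rev (rev (val x)) [::] isT.
by rewrite revK mulw_nil in H; last exact: reduced_rev _ (valP x).
Qed.

Lemma G_inj x z z' : G x z = G x z' -> z = z'.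
Proof.
have K : forall w, mulw (G x w) (val x) = val w.
  move=> w; rewrite /G mulwA; last exact: valP; last exact: reduced_rev _ (valP x).
  rewrite -{2}(mulw_nil _ (valP x)) mulw_rev //; exact: mulw_nil _ (valP w).
move=> E; apply: val_inj; by rewrite -K E K.
Qed.



Definition lvl (c : 'I_3) (g : seq 'I_3) : int :=
  if last c g == c then - (size g)%:Z else (size g)%:Z.

Lemma lvl_tail c a g : lvl c g = if last a g == c then - (size g)%:Z else (size g)%:Z.
Proof. rewrite /lvl; case: g => [|b g] //=; by rewrite eqxx; case: (a == c). Qed.

Lemma lvl_nbw c d g : reducedw g ->
  lvl c (nbw d g) = if (d == head c g) == (lvl c g < 0) then lvl c g + 1 else lvl c g - 1.
Proof.
case: g => [|a g] H.
  rewrite /lvl /= eqxx /=; case: (d == c) => /=; lia.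
rewrite /= [lvl c (a :: g)]/lvl /=.
have E : lvl c (d :: a :: g) = if last a g == c then - (size g).+2%:Z else (size g).+2%:Z by [].
case: (eqVneq a d) => [->|ne]; rewrite ?eqxx ?E ?(lvl_tail c d g) ?(lvl_tail c a g) ?(negbTE ne) ?(eq_sym d a) ?(negbTE ne);
  case: ifP => _ /=; lia.
Qed.

Lemma lvl_sum c g (f : int -> int) : reducedw g ->
  \sum_(d < 3) f (lvl c (nbw d g)) =
  if lvl c g < 0 then 2 * f (lvl c g - 1) + f (lvl c g + 1)
  else f (lvl c g - 1) + 2 * f (lvl c g + 1).
Proof.
move=> H; rewrite (bigD1 (head c g)) //= lvl_nbw // eqxx.
rewrite (eq_bigr (fun _ => f (if false == (lvl c g < 0) then lvl c g + 1 else lvl c g - 1)));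
  last by move=> d /negbTE hd; rewrite lvl_nbw // hd.
rewrite sumr_const cardC1 card_ord /=.
case: (lvl c g < 0) => /=; ring.
Qed.



Definition L (x : V) (c : 'I_3) (z : V) : int := lvl c (G x z).

Lemma L_x x c : L x c x = 0.
Proof. by rewrite /L G_x /lvl /= eqxx. Qed.

Lemma L_nb x c d z : L x c (nb d z) =
  if (d == head c (G x z)) == (L x c z < 0) then L x c z + 1 else L x c z - 1.
Proof. by rewrite /L G_nb lvl_nbw // G_reduced. Qed.

Lemma lvl_eq0 c g : lvl c g = 0 -> g = [::].
Proof. rewrite /lvl; case: g => [|a g] //=; case: ifP => _; lia. Qed.

Lemma L_eq0 x c z : L x c z = 0 -> z = x.
Proof. move/lvl_eq0 => H; apply: (@G_inj x); by rewrite H G_x. Qed.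

Lemma L_m1 x c z : L x c z = -1 -> z = nb c x.
Proof.
rewrite /L => H; apply: (@G_inj x); rewrite G_nb G_x /=.
move: H; rewrite /lvl; case: (G x z) => [|a [|b g]] /=; case: ifP => //; try lia.
by move/eqP => ->.
Qed.

Lemma nbK d z : nb d (nb d z) = z.
Proof. apply: val_inj => /=; apply: nbwK; exact: valP. Qed.

Lemma adj_L x c u v : adj u v -> L x c v = L x c u + 1 \/ L x c v = L x c u - 1.
Proof.
case/existsP => d /eqP <-; rewrite L_nb; case: ifP => _; [left|right]; done.
Qed.

Lemma lip x c u p : path adj u p ->
  L x c (last u p) - L x c u <= (size p)%:Z /\ L x c u - L x c (last u p) <= (size p)%:Z.
Proof.
elim: p u => [|v p IH] u /=; first by move=> _; lia.
case/andP => /(adj_L x c) H /IH [H1 H2]; case: H => H; lia.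
Qed.

Lemma geod x c n z : `|L x c z|%N = n ->
  exists p, [/\ path adj x p, last x p = z, size p = n &
    (L x c z < 0 -> map (L x c) p = [seq - (i.+1)%:Z | i <- iota 0 n])].
Proof.
elim: n z => [|n IH] z Hz.
  have Hz0 : L x c z = 0 by lia.
  by exists [::]; rewrite (L_eq0 _ _ _ Hz0).
set d := head c (G x z).
have Hw : L x c (nb d z) = if L x c z < 0 then L x c z + 1 else L x c z - 1.
  by rewrite L_nb eqxx; case: (L x c z < 0).
have [p [P1 P2 P3 P4]] : exists p, [/\ path adj x p, last x p = nb d z, size p = n &
    (L x c (nb d z) < 0 -> map (L x c) p = [seq - (i.+1)%:Z | i <- iota 0 n])].
  apply: IH; rewrite Hw; case: ifP => h; lia.
exists (rcons p z); split.
- rewrite rcons_path P1 P2 /=; apply/existsP; exists d; by rewrite nbK.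
- by rewrite last_rcons.
- by rewrite size_rcons P3.
- move=> Hneg; rewrite map_rcons -addn1 iotaD map_cat cats1 add0n.
  case: n IH Hz P3 P4 Hw => [|n] IH Hz P3 P4 Hw.
    by move: P3; case: p {P1 P2 P4} => //= _; congr [:: _]; lia.
  rewrite P4; last by rewrite Hw Hneg; lia.
  congr rcons; lia.
Qed.

Lemma dist_L x c z n : dist_is x z n -> n = `|L x c z|%N.
Proof.
case=> [[p [P1 [P2 P3]]] Hmin].
have [q [Q1 Q2 Q3 _]] := geod _ _ _ _ (erefl `|L x c z|%N).
have := Hmin q Q1 Q2; rewrite Q3 => h1.
have := lip x c _ _ P1; rewrite P2 P3 L_x => h2; lia.
Qed.

Lemma dist_L' x c z : dist_is x z `|L x c z|%N.
Proof.
have [q [Q1 Q2 Q3 _]] := geod _ _ _ _ (erefl `|L x c z|%N).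
split; first by exists q.
move=> p P1 P2; have := lip x c _ _ P1; rewrite P2 L_x; lia.
Qed.

Lemma cross x c u q : path adj u q -> L x c u < 0 -> 0 <= L x c (last u q) -> x \in q.
Proof.
elim: q u => [|v q IH] u /=; first by move=> _; lia.
case/andP => /(adj_L x c) Huv Hq Hu.
case: (ltrP (L x c v) 0) => Hv.
  by move=> H; rewrite in_cons (IH v Hq Hv H) orbT.
move=> _; have : L x c v = 0 by case: Huv => ?; lia.
by move/L_eq0 ->; rewrite mem_head.
Qed.

Lemma L_y x c : L x c (nb c x) = -1.
Proof. by rewrite /L G_nb G_x /lvl /= eqxx. Qed.

Lemma PT_neg x c z : L x c z < 0 -> path_through x (nb c x) z.
Proof.
move=> Hz; have [p [P1 P2 P3 P4]] := geod _ _ _ _ (erefl `|L x c z|%N).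
have Hm := P4 Hz.
exists p; split => //.
- apply: (@map_uniq _ _ (L x c)); rewrite /= L_x Hm.
  rewrite map_inj_uniq ?iota_uniq ?andbT; last by move=> i j; lia.
  apply/mapP => [[i _]]; lia.
- move: P3 Hm; case: p {P1 P2 P4} => [|a p] /=; first by lia.
  move=> <- /= [Ha _]; rewrite -(L_m1 x c a); last by rewrite Ha.
  by rewrite !inE eqxx orbT.
Qed.

Lemma PT_nonneg x c z : 0 <= L x c z -> ~ path_through x (nb c x) z.
Proof.
move=> Hz [p [P1 P2 P3 P4]].
have Hy : nb c x \in p.
  move: P4; rewrite in_cons => /orP [/eqP E|//].
  by have := L_y x c; rewrite E L_x => /eqP.
case/splitPr: Hy P1 P2 P3 => p1 p2.
rewrite cat_path last_cat /= => /andP [_ /andP [_ Hp2]] Hu Hl.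
have Hx : x \in p2 by apply: (cross x c _ _ Hp2); rewrite ?L_y ?Hl //.
by move: Hu; rewrite mem_cat in_cons Hx !orbT.
Qed.




Lemma asb_dist x c z (P : nat -> bool) :
  `[< exists n, dist_is x z n /\ P n >] = P `|L x c z|%N.
Proof.
case: asboolP => [[n [Hd Hn]]|H]; first by rewrite -(dist_L x c z n Hd).
apply/esym/negbTE/negP => HP; apply: H; exists `|L x c z|%N; split => //.
exact: dist_L'.
Qed.

Lemma oddS (s : int) : odd (absz (s + 1)) = ~~ odd (absz s).
Proof.
case: s => n.
  by rewrite -PoszD absz_nat addn1.
rewrite NegzE; case: n => [|n] //.
by rewrite (_ : - (n.+2)%:Z + 1 = - (n.+1)%:Z) ?abszN ?absz_nat //; lia.
Qed.

Lemma oddP1 (s : int) : odd (absz (s - 1)) = ~~ odd (absz s).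
Proof. by rewrite -{2}(subrK 1 s) oddS negbK. Qed.

Lemma r_inv x c t z : r (2 * t) x (nb c x) z = u t (L x c z).
Proof.
have hyx : (nb c x == x) = false.
  by apply/negbTE/eqP => E; have := L_y x c; rewrite E L_x => /eqP.
elim: t z => [|t IH] z.
  rewrite /=.
  case: (eqVneq z x) => [->|nzx]; first by rewrite L_x eqxx eq_sym hyx.
  case: (eqVneq z (nb c x)) => [->|nzy]; first by rewrite L_y eqxx.
  have h0 : (L x c z == 0) = false.
    by apply/negbTE/eqP => /L_eq0 E; rewrite E eqxx in nzx.
  have h1 : (L x c z == -1) = false.
    by apply/negbTE/eqP => /L_m1 E; rewrite E eqxx in nzy.
  by rewrite h0 h1.
set F1 := fun k => if odd (absz k) then uodd (u t) k else u t k.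
have H1 : forall w, USigma x (r (2 * t) x (nb c x)) w = F1 (L x c w).
  move=> w; rewrite /USigma (asb_dist x c w odd) /sigma eqxx IH.
  under eq_bigr => d _ do rewrite IH /L G_nb.
  rewrite lvl_sum ?G_reduced // /F1 -/(L x c w).
  case: ifP => // _; rewrite /uodd; case: ifP => _; ring.
rewrite (_ : (2 * t.+1 = (2 * t).+2)%N); last lia.
rewrite /= oddM /= /Sigma (asb_dist x c z (fun n => ~~ odd n)) /sigma eqxx.
under eq_bigr => d _ do rewrite H1 /L G_nb.
rewrite H1 lvl_sum ?G_reduced // /F1 -/(L x c z) oddS oddP1.
case ho : (odd (absz (L x c z))) => /=; rewrite /ueven //; case: ifP => _; ring.
Qed.



Definition Osum (p : int -> int) (M : nat) : int :=
  \sum_(1 <= s < M | odd s) (2 ^+ s * p s%:Z)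
     + \sum_(1 <= s < M | odd s) (2 ^+ (s - 1) * p (- s%:Z)).
Definition Esum (p : int -> int) (M : nat) : int :=
  \sum_(0 <= s < M | ~~ odd s) (2 ^+ s * p s%:Z)
     + \sum_(2 <= s < M | ~~ odd s) (2 ^+ (s - 1) * p (- s%:Z)).

Lemma sum_recr (m n : nat) (P : pred nat) (F : nat -> int) : (m <= n)%N ->
  \sum_(m <= s < n.+1 | P s) F s = \sum_(m <= s < n | P s) F s + (if P n then F n else 0).
Proof. by move=> H; rewrite big_mkcond big_nat_recr //= -big_mkcond. Qed.

Lemma Osum_rec p n : (1 <= n)%N -> Osum p n.+1 =
  Osum p n + (if odd n then 2 ^+ n * p n%:Z + 2 ^+ (n - 1) * p (- n%:Z) else 0).
Proof. move=> H; rewrite /Osum !sum_recr //; case: ifP => _; ring. Qed.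

Lemma Esum_rec p n : (2 <= n)%N -> Esum p n.+1 =
  Esum p n + (if ~~ odd n then 2 ^+ n * p n%:Z + 2 ^+ (n - 1) * p (- n%:Z) else 0).
Proof. move=> H; rewrite /Esum !sum_recr //; case: ifP => _; ring. Qed.

Lemma Osum1 p : Osum p 1 = 0.
Proof. by rewrite /Osum !big_geq. Qed.
Lemma Esum1 p : Esum p 1 = p 0.
Proof. rewrite /Esum sum_recr // !big_geq //= expr0 mul1r; ring. Qed.
Lemma Osum2 p : Osum p 2 = 2 * p 1 + p (-1).
Proof. by rewrite Osum_rec // Osum1 /= expr1 expr0 mul1r add0r. Qed.
Lemma Esum2 p : Esum p 2 = p 0.
Proof. rewrite /Esum sum_recr // sum_recr // !big_geq //= expr0 mul1r; ring. Qed.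

Lemma Osum_ev p k : Osum p (k.*2.+3) = Osum p (k.*2.+2).
Proof. by rewrite Osum_rec //= odd_double addr0. Qed.
Lemma Osum_od p k : Osum p (k.*2.+2) =
  Osum p (k.*2.+1) + (2 ^+ (k.*2.+1) * p (k.*2.+1)%:Z + 2 ^+ (k.*2) * p (- (k.*2.+1)%:Z)).
Proof. by rewrite Osum_rec //= odd_double subn1. Qed.
Lemma Esum_od p k : Esum p (k.*2.+2) = Esum p (k.*2.+1).
Proof.
case: k => [|k]; first by rewrite Esum2 Esum1.
by rewrite Esum_rec /= ?odd_double ?addr0 //; lia.
Qed.
Lemma Esum_ev p k : Esum p (k.*2.+3) =
  Esum p (k.*2.+2) + (2 ^+ (k.*2.+2) * p (k.*2.+2)%:Z + 2 ^+ (k.*2.+1) * p (- (k.*2.+2)%:Z)).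
Proof. by rewrite Esum_rec //= odd_double subn1. Qed.

Lemma uodd_pos p n : uodd p (n.+1)%:Z = p n%:Z - p n.+1%:Z + 2 * p n.+2%:Z.
Proof.
rewrite /uodd (_ : (n.+1%:Z < 0) = false); last by lia.
by rewrite (_ : n.+1%:Z - 1 = n%:Z) 1?(_ : n.+1%:Z + 1 = n.+2%:Z) //; lia.
Qed.

Lemma uodd_neg p n : uodd p (- (n.+1)%:Z) = 2 * p (- n.+2%:Z) - p (- n.+1%:Z) + p (- n%:Z).
Proof.
rewrite /uodd (_ : (- n.+1%:Z < 0) = true); last by lia.
by rewrite (_ : - n.+1%:Z - 1 = - n.+2%:Z) 1?(_ : - n.+1%:Z + 1 = - n%:Z) //; lia.
Qed.

Lemma ueven_pos p q n : ueven p q (n.+1)%:Z = q n%:Z - p n.+1%:Z + 2 * q n.+2%:Z.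
Proof.
rewrite /ueven (_ : (n.+1%:Z < 0) = false); last by lia.
by rewrite (_ : n.+1%:Z - 1 = n%:Z) 1?(_ : n.+1%:Z + 1 = n.+2%:Z) //; lia.
Qed.

Lemma ueven_0 p q : ueven p q 0 = q (- 1%:Z) - p 0 + 2 * q 1%:Z.
Proof. by []. Qed.

Lemma ueven_neg p q n : ueven p q (- (n.+1)%:Z) = 2 * q (- n.+2%:Z) - p (- n.+1%:Z) + q (- n%:Z).
Proof.
rewrite /ueven (_ : (- n.+1%:Z < 0) = true); last by lia.
by rewrite (_ : - n.+1%:Z - 1 = - n.+2%:Z) 1?(_ : - n.+1%:Z + 1 = - n%:Z) //; lia.
Qed.

Lemma tel_odd p k :
  Osum (uodd p) (k.*2.+1) = 3 * Esum p (k.*2.+1) - Osum p (k.*2.+1)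
     - (2 ^+ (k.*2.+1) * p (k.*2)%:Z + 2 ^+ (k.*2) * p (- (k.*2)%:Z)) /\
  Osum (uodd p) (k.*2.+2) = 3 * Esum p (k.*2.+2) - Osum p (k.*2.+2)
     + (2 ^+ (k.*2.+2) * p (k.*2.+2)%:Z + 2 ^+ (k.*2.+1) * p (- (k.*2.+2)%:Z)).
Proof.
have step2 : forall k, Osum (uodd p) (k.*2.+1) = 3 * Esum p (k.*2.+1) - Osum p (k.*2.+1)
     - (2 ^+ (k.*2.+1) * p (k.*2)%:Z + 2 ^+ (k.*2) * p (- (k.*2)%:Z)) ->
  Osum (uodd p) (k.*2.+2) = 3 * Esum p (k.*2.+2) - Osum p (k.*2.+2)
     + (2 ^+ (k.*2.+2) * p (k.*2.+2)%:Z + 2 ^+ (k.*2.+1) * p (- (k.*2.+2)%:Z)).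
  move=> j IH; rewrite !Osum_od Esum_od IH uodd_pos uodd_neg !exprS; ring.
elim: k => [|k [_ IH]].
  have h : Osum (uodd p) 1 = 3 * Esum p 1 - Osum p 1 - (2 ^+ 1 * p 0%:Z + 2 ^+ 0 * p (- 0%:Z)).
    by rewrite !Osum1 Esum1 oppr0 expr1 expr0; ring.
  by split => //; apply: step2.
have h : Osum (uodd p) (k.+1.*2.+1) = 3 * Esum p (k.+1.*2.+1) - Osum p (k.+1.*2.+1)
     - (2 ^+ (k.+1.*2.+1) * p (k.+1.*2)%:Z + 2 ^+ (k.+1.*2) * p (- (k.+1.*2)%:Z)).
  rewrite /= !Osum_ev Esum_ev IH !exprS; ring.
by split => //; apply: step2.
Qed.

Lemma tel_even p q k :
  Esum (ueven p q) (k.*2.+1) = 3 * Osum q (k.*2.+1) - Esum p (k.*2.+1)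
     + (2 ^+ (k.*2.+1) * q (k.*2.+1)%:Z + 2 ^+ (k.*2) * q (- (k.*2.+1)%:Z)) /\
  Esum (ueven p q) (k.*2.+2) = 3 * Osum q (k.*2.+2) - Esum p (k.*2.+2)
     - (2 ^+ (k.*2.+2) * q (k.*2.+1)%:Z + 2 ^+ (k.*2.+1) * q (- (k.*2.+1)%:Z)).
Proof.
have step2 : forall k, Esum (ueven p q) (k.*2.+1) = 3 * Osum q (k.*2.+1) - Esum p (k.*2.+1)
     + (2 ^+ (k.*2.+1) * q (k.*2.+1)%:Z + 2 ^+ (k.*2) * q (- (k.*2.+1)%:Z)) ->
  Esum (ueven p q) (k.*2.+2) = 3 * Osum q (k.*2.+2) - Esum p (k.*2.+2)
     - (2 ^+ (k.*2.+2) * q (k.*2.+1)%:Z + 2 ^+ (k.*2.+1) * q (- (k.*2.+1)%:Z)).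
  move=> j IH; rewrite !Esum_od Osum_od IH !exprS; ring.
elim: k => [|k [_ IH]].
  have h : Esum (ueven p q) 1 = 3 * Osum q 1 - Esum p 1
     + (2 ^+ 1 * q 1%:Z + 2 ^+ 0 * q (- 1%:Z)).
    by rewrite !Esum1 Osum1 ueven_0 expr1 expr0; ring.
  by split => //; apply: step2.
have h : Esum (ueven p q) (k.+1.*2.+1) = 3 * Osum q (k.+1.*2.+1) - Esum p (k.+1.*2.+1)
     + (2 ^+ (k.+1.*2.+1) * q (k.+1.*2.+1)%:Z + 2 ^+ (k.+1.*2) * q (- (k.+1.*2.+1)%:Z)).
  rewrite /= !Esum_ev Osum_ev IH ueven_pos ueven_neg !exprS; ring.
by split => //; apply: step2.
Qed.



Lemma u_supp t (s : int) : (2 * t + 2 <= absz s)%N -> u t s = 0.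
Proof.
elim: t s => [|t IH] s H /=.
  case: eqP => [E|_]; first lia.
  case: eqP => [E|_]; first lia. by [].
have Ho : forall k : int, (2 * t + 3 <= absz k)%N -> uodd (u t) k = 0.
  move=> k Hk; rewrite /uodd (IH (k - 1)) ?(IH k) ?(IH (k + 1)); try lia.
  by case: ifP.
case: ifP => _; first (apply: Ho; lia).
rewrite /ueven (IH s) ?(Ho (s - 1)) ?(Ho (s + 1)); try lia.
by case: ifP.
Qed.

Lemma uodd_supp t (s : int) : (2 * t + 3 <= absz s)%N -> uodd (u t) s = 0.
Proof.
move=> Hk; rewrite /uodd (u_supp t (s - 1)) ?(u_supp t s) ?(u_supp t (s + 1)); try lia.
by case: ifP.
Qed.

Lemma Osum_ext p p' M : (forall s : nat, odd s -> p s%:Z = p' s%:Z /\ p (- s%:Z) = p' (- s%:Z)) ->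
  Osum p M = Osum p' M.
Proof.
move=> H; rewrite /Osum; congr (_ + _); apply: eq_bigr => s hs; by rewrite ?(H s hs).1 ?(H s hs).2.
Qed.



Lemma Esum_ext p p' M : (forall s : nat, ~~ odd s -> p s%:Z = p' s%:Z /\ p (- s%:Z) = p' (- s%:Z)) ->
  Esum p M = Esum p' M.
Proof.
move=> H; rewrite /Esum; congr (_ + _); apply: eq_bigr => s hs; by rewrite ?(H s hs).1 ?(H s hs).2.
Qed.

Lemma tel_odd_all p K M : (forall s : int, (K <= absz s)%N -> p s = 0) -> (K < M)%N ->
  Osum (uodd p) M = 3 * Esum p M - Osum p M.
Proof.
move=> Hp HM; have E := odd_double_half M.
case: (odd M) E => /= E; move: HM; rewrite -E; move: (M./2) => k HM {E}.
- have [-> _] := tel_odd p k; rewrite !Hp; try (rewrite ?abszN absz_nat; lia). ring.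
- case: k HM => [|k] HM //; rewrite doubleS; have [_ ->] := tel_odd p k.
  rewrite !Hp; try (rewrite ?abszN absz_nat; lia). ring.
Qed.

Lemma tel_even_all p q K M : (forall s : int, (K <= absz s)%N -> q s = 0) -> (K < M)%N ->
  Esum (ueven p q) M = 3 * Osum q M - Esum p M.
Proof.
move=> Hp HM; have E := odd_double_half M.
case: (odd M) E => /= E; move: HM; rewrite -E; move: (M./2) => k HM {E}.
- have [-> _] := tel_even p q k; rewrite !Hp; try (rewrite ?abszN absz_nat; lia). ring.
- case: k HM => [|k] HM //; rewrite doubleS; have [_ ->] := tel_even p q k.
  rewrite !Hp; try (rewrite ?abszN absz_nat; lia). ring.
Qed.



Lemma fibZ_rec (i : int) : fibZ (i + 2) = fibZ (i + 1) + fibZ i.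
Proof.
case: i => n.
  have e1 : n%:Z + 2 = n.+2%:Z by lia.
  have e2 : n%:Z + 1 = n.+1%:Z by lia.
  rewrite e1 e2; reflexivity.
case: n => [|[|m]].
- have e1 : Negz 0 + 2 = 1 by lia.
  have e2 : Negz 0 + 1 = 0 by lia.
  rewrite e1 e2; reflexivity.
- have e1 : Negz 1 + 2 = 0 by lia.
  have e2 : Negz 1 + 1 = Negz 0 by lia.
  rewrite e1 e2; reflexivity.
- have e1 : Negz m.+2 + 2 = Negz m by lia.
  have e2 : Negz m.+2 + 1 = Negz m.+1 by lia.
  rewrite e1 e2 /= !exprS; ring.
Qed.

Lemma fib4 (i : int) : fibZ (i + 4) = 3 * fibZ (i + 2) - fibZ i.
Proof.
have h1 := fibZ_rec (i + 2); have h2 := fibZ_rec (i + 1); have h3 := fibZ_rec i.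
have e1 : i + 2 + 2 = i + 4 by lia.
have e2 : i + 2 + 1 = i + 1 + 2 by lia.
have e3 : i + 1 + 1 = i + 2 by lia.
rewrite e1 e2 in h1; rewrite e3 in h2.
rewrite h1 h2 h3; ring.
Qed.

Lemma Osum_stab p K M : (1 <= K)%N -> (forall s : nat, (K <= s)%N -> p s%:Z = 0 /\ p (- s%:Z) = 0) ->
  (K <= M)%N -> Osum p M = Osum p K.
Proof.
move=> HK H; elim: M => [|M IH] HM; first lia.
case: (eqVneq K M.+1) => [<-|ne] //.
rewrite Osum_rec; last lia.
rewrite IH; last lia.
have [-> ->] : p M%:Z = 0 /\ p (- M%:Z) = 0 by apply: H; lia.
by case: ifP => _; ring.
Qed.

Lemma Esum_stab p K M : (2 <= K)%N -> (forall s : nat, (K <= s)%N -> p s%:Z = 0 /\ p (- s%:Z) = 0) ->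
  (K <= M)%N -> Esum p M = Esum p K.
Proof.
move=> HK H; elim: M => [|M IH] HM; first lia.
case: (eqVneq K M.+1) => [<-|ne] //.
rewrite Esum_rec; last lia.
rewrite IH; last lia.
have [-> ->] : p M%:Z = 0 /\ p (- M%:Z) = 0 by apply: H; lia.
by case: ifP => _; ring.
Qed.

Lemma fib_main t M : (2 * t + 4 <= M)%N ->
  Osum (u t) M = fibZ (4 * t%:Z - 1) /\ Esum (u t) M = fibZ (4 * t%:Z + 1).
Proof.
elim: t M => [|t IH] M HM.
  have Hs : forall s : nat, (4 <= s)%N -> u 0 s%:Z = 0 /\ u 0 (- s%:Z) = 0.
    by move=> s hs; split; apply: u_supp; rewrite ?abszN absz_nat; lia.
  rewrite (Osum_stab _ _ _ _ Hs) // (Esum_stab _ _ _ _ Hs) //; try lia.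
  rewrite Osum_rec // Osum_rec // Osum2 Esum_rec // Esum_rec // Esum2.
  have e1 : 4 * 0%:Z - 1 = Negz 0 by lia.
  have e2 : 4 * 0%:Z + 1 = 1 by lia.
  rewrite e1 e2 /=.
  split; ring.
have [IH1 IH2] := IH M ltac:(lia).
have Eo : Osum (u t.+1) M = Osum (uodd (u t)) M.
  apply: Osum_ext => s hs /=; by rewrite ?abszN absz_nat hs.
have Ee : Esum (u t.+1) M = Esum (ueven (u t) (uodd (u t))) M.
  apply: Esum_ext => s hs /=; by rewrite ?abszN absz_nat (negbTE hs).
have Ho : Osum (u t.+1) M = fibZ (4 * t.+1%:Z - 1).
  rewrite Eo (tel_odd_all _ (2 * t + 2)%N); last lia; last first.
    by move=> s hs; apply: u_supp.
  rewrite IH1 IH2 (_ : 4 * t.+1%:Z - 1 = (4 * t%:Z - 1) + 4); last lia.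
  rewrite fib4 (_ : 4 * t%:Z - 1 + 2 = 4 * t%:Z + 1) //; lia.
split => //.
rewrite Ee (tel_even_all _ _ (2 * t + 3)%N); last lia; last first.
  by move=> s hs; apply: uodd_supp.
rewrite -Eo Ho IH2 (_ : 4 * t.+1%:Z + 1 = (4 * t%:Z + 1) + 4); last lia.
rewrite fib4 (_ : 4 * t%:Z + 1 + 2 = 4 * t.+1%:Z - 1) //; lia.
Qed.

Theorem mainTheorem2 (x y : V) (hxy : adj x y) (t : nat) :
  (forall (s : nat) (z : V), inT x y s z -> u t s%:Z = r (2 * t) x y z) /\
  (forall (s : nat) (z : V), (1 <= s)%N -> inT' x y s z -> u t (- s%:Z) = r (2 * t) x y z) /\
  (exists N : nat, forall M : nat, (N <= M)%N ->
     fibZ (4 * t%:Z - 1) =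
       \sum_(1 <= s < M | odd s) (2 ^+ s * u t s%:Z)
     + \sum_(1 <= s < M | odd s) (2 ^+ (s - 1) * u t (- s%:Z))) /\
  (exists N : nat, forall M : nat, (N <= M)%N ->
     fibZ (4 * t%:Z + 1) =
       \sum_(0 <= s < M | ~~ odd s) (2 ^+ s * u t s%:Z)
     + \sum_(2 <= s < M | ~~ odd s) (2 ^+ (s - 1) * u t (- s%:Z))).
Proof.
case/existsP: (hxy) => c /eqP Hy; subst y.
split.
  move=> s z [Hd Hnt]; have Hs := dist_L x c z s Hd.
  have Hl : 0 <= L x c z.
    case: (lerP 0 (L x c z)) => // h; exfalso; apply: Hnt; exact: PT_neg h.
  rewrite r_inv (_ : s%:Z = L x c z) //; lia.
split.
  move=> s z Hs1 [Hd Hpt]; have Hs := dist_L x c z s Hd.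
  have Hl : L x c z < 0.
    case: (lerP 0 (L x c z)) => // h; exfalso; exact: (PT_nonneg x c z h Hpt).
  rewrite r_inv (_ : - s%:Z = L x c z) //; lia.
split.
  exists (2 * t + 4)%N => M HM; have [h1 _] := fib_main t M HM; by rewrite -h1.
exists (2 * t + 4)%N => M HM; have [_ h2] := fib_main t M HM; by rewrite -h2.
Qed.
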